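(* Let $\mathcal N$ be a ground set with $|\mathcal N|=n$, $f:2^{\mathcal N}\to\mathbb R$ monotone submodular, $k\ge1$ an integer, $0<\epsilon<1/2$, and $O$ an optimal solution of size $k$ to $\max\{f(S):|S|\le k\}$. Suppose $\textsc{LowAdapLinearSeq}(f,\mathcal N,k,\epsilon)$ (described in the context) terminates successfully, and let $A$ and $V$ be the final values of the sets $A$ and $V$ maintained by the algorithm. Then $f(O\setminus V)\le2f(A)$.
   Context: $f$ is submodular if $f(T\cup\{x\})-f(T)\le f(S\cup\{x\})-f(S)$ for all $S\subseteq T\subseteq\mathcal N$, $x\notin T$; monotone if $f(S)\le f(T)$ for $S\subseteq T$. $\Delta(x\mid S)=f(S\cup\{x\})-f(S)$, $\Delta(T\mid S)=f(S\cup T)-f(S)$. $\log$ is natural log. Algorithm $\textsc{LowAdapLinearSeq}(f,\mathcal N,k,\epsilon)$: Let $a=\arg\max_{u\in\mathcal N}f(\{u\})$; $A\leftarrow\{a\}$, $V\leftarrow\mathcal N$, $\beta=\epsilon/(16\log(8/(1-e^{-\epsilon/2})))$, $\ell=\lceil4(1+1/(\beta\epsilon))\log(n/k)\rceil$. For $j=1,\dots,\ell$: (i) $V\leftarrow\{x\in V:\Delta(x\mid A)\ge f(A)/k\}$; (ii) if $|V|\le k$, break; (iii) let $(v_1,\dots,v_{|V|})$ be a uniformly random permutation of $V$; (iv) $\Lambda=\{\lfloor(1+\epsilon)^u\rfloor:1\le\lfloor(1+\epsilon)^u\rfloor\le k,u\in\mathbb N\}\cup\{\lfloor k+u\epsilon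 k\rfloor:\lfloor k+u\epsilon k\rfloor\le|V|,u\in\mathbb N\}\cup\{|V|\}$ with elements $\lambda_1<\lambda_2<\cdots$, $\lambda_0=0$, $T_\lambda=\{v_1,\dots,v_\lambda\}$, $T'_{\lambda_i}=T_{\lambda_i}\setminus T_{\lambda_{i-1}}$; (v) in parallel set $B[\lambda_i]=\text{true}$ iff $\Delta(T'_{\lambda_i}\mid A\cup T_{\lambda_{i-1}})/|T'_{\lambda_i}|\ge(1-\epsilon)f(A\cup T_{\lambda_{i-1}})/k$; (vi) $\lambda^*$ is the largest $\lambda_i\in\Lambda$ with $B[\lambda_i]=\text{false}$ and either ($\lambda_i\le k$ and $B[\lambda_1],\dots,B[\lambda_{i-1}]$ all true) or ($\lambda_i>k$ and some $m\ge1$ has $|\bigcup_{u=m}^{i-1}T'_{\lambda_u}|\ge k$ and $B[\lambda_m],\dots,B[\lambda_{i-1}]$ all true); (vii) $A\leftarrow A\cup T_{\lambda^*}$. After the loop: if $|V|>k$ return failure; otherwise (successful termination) let $A'$ be the last $k$ elements added to $A$ and return $\arg\max\{f(A'),f(V)\}$. *)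

(* Defs.v *)
From HB Require Import structures.
From mathcomp Require Import all_boot all_order all_algebra.
From mathcomp Require Import boolp reals sequences exp.
Set Implicit Arguments. Unset Strict Implicit. Unset Printing Implicit Defensive.
Import Order.TTheory GRing.Theory Num.Theory.
Local Open Scope ring_scope.

Section LowAdap.
Variables (R : realType) (T : finType).

Definition monotone_setfun (f : {set T} -> R) :=
  forall S U : {set T}, S \subset U -> f S <= f U.

Definition submodular (f : {set T} -> R) :=
  forall (S U : {set T}) (x : T), S \subset U -> x \notin U ->
    f (x |: U) - f U <= f (x |: S) - f S.

Definition Delta (f : {set T} -> R) (U S : {set T}) := f (S :|: U) - f S.

Variables (f : {set T} -> R) (k : nat) (eps : R).

Definition beta_par : R := eps / (16 * ln (8 / (1 - expR (- (eps / 2))))).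
Definition ell_par : nat :=
  absz (Num.ceil (4 * (1 + 1 / (beta_par * eps)) * ln (#|T|%:R / k%:R))).

(* Lambda, for a current candidate set of size s *)
Definition Lambda_mem (s m : nat) : Prop :=
  (exists u : nat, Num.floor ((1 + eps) ^+ u) = m%:Z /\ (1 <= m <= k)%N)
  \/ (exists u : nat, Num.floor (k%:R + u%:R * eps * k%:R) = m%:Z /\ (m <= s)%N)
  \/ m = s.
Definition inLambda (s m : nat) : bool := `[< Lambda_mem s m >].

(* predecessor of m in Lambda u {0} (i.e. lambda_{i-1} when m = lambda_i) *)
Definition prevL (s m : nat) : nat := \max_(i < m | inLambda s i) (i : nat).

Definition Tl (sq : seq T) (l : nat) : {set T} := [set x in take l sq].
Definition Tpl (sq : seq T) (l : nat) : {set T} :=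
  Tl sq l :\: Tl sq (prevL (size sq) l).

Definition Bval (A : {set T}) (sq : seq T) (l : nat) : bool :=
  let Tprev := Tl sq (prevL (size sq) l) in
  (1 - eps) * f (A :|: Tprev) / k%:R <=
    Delta f (Tpl sq l) (A :|: Tprev) / #|Tpl sq l|%:R.

Definition lam_cond (A : {set T}) (sq : seq T) (m : nat) : bool :=
  let s := size sq in
  [&& inLambda s m, ~~ Bval A sq m &
   ((m <= k)%N && [forall i : 'I_m, inLambda s i ==> Bval A sq i])
   || ((k < m)%N &&
       [exists mu : 'I_m, ((mu == 0%N :> nat) || inLambda s mu) &&
          (k <= #|\bigcup_(i < m | inLambda s i && (mu < i)%N) Tpl sq i|)%N &&
          [forall i : 'I_m, (inLambda s i && (mu < i)%N) ==> Bval A sq i]])].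

(* lambda^* : the largest element satisfying the condition (0 if none exists) *)
Definition lam_star (A : {set T}) (sq : seq T) : nat :=
  \max_(m < (size sq).+1 | lam_cond A sq m) (m : nat).

(* the main loop: j is the iteration counter, sigma j s is the (random)
   permutation of the sequence s chosen at iteration j *)
Fixpoint main_loop (sigma : nat -> seq T -> seq T) (fuel j : nat)
    (A V : {set T}) : {set T} * {set T} :=
  match fuel with
  | 0 => (A, V)
  | fuel'.+1 =>
      let V' := [set x in V | f A / k%:R <= Delta f [set x] A] in
      if (#|V'| <= k)%N then (A, V')
      else
        let sq := sigma j (enum V') in
        main_loop sigma fuel' j.+1 (A :|: Tl sq (lam_star A sq)) V'
  end.

(* final values (A, V) of a run, started with A = {a}, V = N;
   the run terminates successfully iff #|V| <= k at the end *)
Definition LowAdapLinearSeq_final (a : T) (sigma : nat -> seq T -> seq T)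
  : {set T} * {set T} :=
  main_loop sigma ell_par 1 [set a] [set: T].

End LowAdap.

(* Main.v *)
Require Import Defs.
From HB Require Import structures.
From mathcomp Require Import all_boot all_order all_algebra.
From mathcomp Require Import boolp reals sequences exp.
From mathcomp Require Import ring lra.
Import Order.TTheory GRing.Theory Num.Theory.
Local Open Scope ring_scope.

Section Aux.
Variables (R : realType) (T : finType) (f : {set T} -> R) (k : nat) (eps : R).
Hypothesis fmono : monotone_setfun f.
Hypothesis fsub : submodular f.
Hypothesis fge0 : forall S, 0 <= f S.

Definition inv (A V : {set T}) :=
  forall x, x \notin V -> f (x |: A) - f A <= f A / k%:R.

Lemma step_inv (A A' V : {set T}) : A \subset A' -> inv A V -> inv A' V.
Proof.
move=> sAA' iv x xV.
have h1 : f A / k%:R <= f A' / k%:R.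
  by rewrite ler_wpM2r ?invr_ge0 ?ler0n //; exact: fmono.
have h0 : 0 <= f A' / k%:R by apply: divr_ge0.
case xA: (x \in A').
  by rewrite (setUidPr _) ?sub1set // subrr.

apply: le_trans h1.
apply: le_trans (iv x xV).
by apply: fsub => //; rewrite xA.
Qed.

Lemma loop_inv sigma fuel j A V :
  inv A V -> inv (main_loop f k eps sigma fuel j A V).1
                 (main_loop f k eps sigma fuel j A V).2.
Proof.
elim: fuel j A V => [|n IH] j A V iv //=.
set V' := [set x in V | _].
have iv' : inv A V'.
  move=> x; rewrite inE negb_and => /orP [/iv //|].
  rewrite /Delta setUC -ltNge => /ltW.
  by [].
case: ifP => _ //.
apply: IH; apply: step_inv iv' ; exact: subsetUl.
Qed.

Lemma union_bound (A : {set T}) (s : seq T) :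
  f (A :|: [set x in s]) - f A <= \sum_(x <- s) (f (x |: A) - f A).
Proof.
elim: s => [|x s IH].
  by rewrite big_nil (_ : [set x in [::]] = set0) ?setU0 ?subrr //; apply/setP=> y; rewrite !inE.
rewrite big_cons.
have -> : A :|: [set y in x :: s] = x |: (A :|: [set y in s]).
  by apply/setP=> y; rewrite !inE; case: (y == x); rewrite ?orbT.
set B := A :|: [set y in s].
have -> : f (x |: B) - f A = (f (x |: B) - f B) + (f B - f A) by ring.
apply: lerD => //.
case xB: (x \in B).
  rewrite (setUidPr _) ?sub1set // subrr subr_ge0; apply: fmono; exact: subsetUr.
by apply: fsub; [exact: subsetUl | rewrite xB].
Qed.

End Aux.

Theorem lemma15 (R : realType) (T : finType) (f : {set T} -> R) (k : nat)
    (eps : R) (O : {set T}) (a : T) (sigma : nat -> seq T -> seq T) :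
  monotone_setfun f -> submodular f ->
  (forall S, 0 <= f S) ->
  (0 < k)%N -> 0 < eps -> eps < 1 / 2 ->
  #|O| = k -> (forall S : {set T}, (#|S| <= k)%N -> f S <= f O) ->
  (forall u : T, f [set u] <= f [set a]) ->
  (forall (j : nat) (s : seq T), perm_eq (sigma j s) s) ->
  (#|(LowAdapLinearSeq_final f k eps a sigma).2| <= k)%N ->
  f (O :\: (LowAdapLinearSeq_final f k eps a sigma).2)
    <= 2 * f (LowAdapLinearSeq_final f k eps a sigma).1.
Proof.
move=> fm fs f0 k0 _ _ cO _ _ _ _.
have := @loop_inv R T f k eps fm fs f0 sigma (@ell_par R T k eps) 1 [set a] [set: T].
rewrite /LowAdapLinearSeq_final.
case: (main_loop _ _ _ _ _ _ _ _) => A V /= iv.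
have {}iv : @inv R T f k A V by apply: iv => x; rewrite inE.
set S := O :\: V.
have eS : S = [set x in enum S] by apply/setP=> x; rewrite inE mem_enum.
have h1 : f S <= f (A :|: S) by apply: fm; exact: subsetUr.
have h2 := @union_bound R T f fm fs A (enum S).
rewrite -eS in h2.
have h3 : \sum_(x <- enum S) (f (x |: A) - f A) <= #|S|%:R * (f A / k%:R).
  apply: (@le_trans _ _ (\sum_(x <- enum S) (f A / k%:R))).
    rewrite !big_seq; apply: ler_sum => x; rewrite mem_enum inE => /andP [xV _].
    exact: iv.
  rewrite big_const_seq count_predT -cardE.
  by rewrite iter_addr_0 mulr_natl.
have h4 : #|S|%:R * (f A / k%:R) <= f A.
  have kp : 0 < k%:R :> R by rewrite ltr0n.
  rewrite mulrA ler_pdivrMr // mulrC; apply: ler_wpM2l; first exact: f0.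
  by rewrite ler_nat -cO; apply: subset_leq_card; exact: subsetDl.
have : 2 * f A = f A + f A by ring.
lra.
Qed.
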